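(* Let $\kappa,\mu,\nu>0$ and $0<\gamma<\frac1{\kappa+4}$. Let $(a,b)\in\mathbb R^2\setminus\{0\}$ satisfy $|b|\ge\mu$ or $|a|^\kappa|b|\ge\nu$, and set, for $x\ge1$, $$f(x)=\big(bx^{\frac34+\gamma}-ax^{-\frac14}\big)^2\big(x^{\frac14-\frac1{\kappa+4}}\big)^2+\big(bx^{\frac14}\big)^2\big(x^{\frac14-\frac1{\kappa+4}}\big)^2.$$ Then for every $\rho$ with $0<\rho\le f(1)$ there exist $C,\epsilon_0>0$, depending only on $\rho,\kappa,\mu,\nu,\gamma$, such that $f$ is $(C,\tfrac12;\rho,\epsilon_0)$-good on $[1,\infty)$.
   Context: A function $f$ on $[1,\infty)$ is $(C,\alpha;\rho,\epsilon_0)$-good if for every $0<\epsilon<\epsilon_0$ and every interval $I=(x_1,x_2)\subset[1,\infty)$ with $|f(x_1)|=\rho$, one has $m(\{x\in I:|f(x)|\le\epsilon\})\le C(\epsilon/\rho)^\alpha m(I)$, where $m$ is Lebesgue measure. *)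

(* Defs.v *)
From Stdlib Require Import Reals.
Open Scope R_scope.

(* Lebesgue outer measure bound: m*(A) <= c, i.e. for every delta > 0, A is
   covered by countably many open intervals (a_n, b_n) whose total length
   is at most c + delta. *)
Definition lebesgue_outer_le (A : R -> Prop) (c : R) : Prop :=
  forall delta : R, 0 < delta ->
    exists a b : nat -> R,
      (forall n, a n <= b n) /\
      (forall x, A x -> exists n, a n < x < b n) /\
      (forall N, sum_f_R0 (fun n => b n - a n) N <= c + delta).

Definition good (f : R -> R) (C alpha rho eps0 : R) : Prop :=
  forall eps : R, 0 < eps < eps0 ->
  forall x1 x2 : R, 1 <= x1 -> x1 < x2 ->
    Rabs (f x1) = rho ->
    lebesgue_outer_le (fun x => x1 < x < x2 /\ Rabs (f x) <= eps)
                      (C * Rpower (eps / rho) alpha * (x2 - x1)).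

Definition f41 (kappa gamma a b : R) (x : R) : R :=
  let t := Rpower x (/4 - / (kappa + 4)) in
  (b * Rpower x (3/4 + gamma) - a * Rpower x (- (/4))) ^ 2 * t ^ 2
  + (b * Rpower x (/4)) ^ 2 * t ^ 2.

(* t^k for t >= 0, k > 0, with the convention 0^k = 0
   (Stdlib's Rpower 0 k would be exp (k * ln 0) = 1). *)
Definition nnpow (t k : R) : R :=
  if Rle_dec t 0 then 0 else Rpower t k.

(* Main.v *)
Require Import Defs.
From Stdlib Require Import Reals Lra Psatz Classical FunctionalExtensionality.
Open Scope R_scope.

Lemma rp_pos x e : 0 < Rpower x e.
Proof. unfold Rpower; apply exp_pos. Qed.

Lemma rp_mono_base x y e : 0 < x <= y -> 0 <= e -> Rpower x e <= Rpower y e.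
Proof. intros. apply Rle_Rpower_l; lra. Qed.

Lemma rp_two x e : 1 <= x -> 0 <= e <= 1 -> Rpower (2*x) e <= 2 * Rpower x e.
Proof. intros. rewrite <- Rpower_mult_distr by lra.
  assert (Rpower 2 e <= 2). { rewrite <- (Rpower_1 2) at 2 by lra. apply Rle_Rpower; lra. }
  pose proof (rp_pos x e). nra. Qed.

Lemma diff_lower y z g : 1 <= y <= z -> 0 <= g ->
  Rpower y g * (z - y) <= Rpower z (1+g) - Rpower y (1+g).
Proof. intros. rewrite !Rpower_plus, !Rpower_1 by lra.
  pose proof (rp_mono_base y z g ltac:(lra) H0). pose proof (rp_pos y g). nra. Qed.

Lemma diff_upper y z g : 1 <= y <= z -> 0 <= g <= 1 ->
  Rpower z (1+g) - Rpower y (1+g) <= 2 * Rpower z g * (z - y).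
Proof. intros. rewrite !Rpower_plus, !Rpower_1 by lra.
  set (t := z / y).
  assert (Hzt : z = y * t) by (unfold t; field; lra).
  assert (Ht : 1 <= t). { apply (Rmult_le_reg_l y); lra. }
  assert (Hz : Rpower z g = Rpower y g * Rpower t g).
  { rewrite Rpower_mult_distr by lra. rewrite <- Hzt. reflexivity. }
  assert (Htg : Rpower t g <= t). { rewrite <- (Rpower_1 t) at 2 by lra. apply Rle_Rpower; lra. }
  assert (Htg1 : 1 <= Rpower t g). { rewrite <- (Rpower_O t) by lra. apply Rle_Rpower; lra. }
  pose proof (rp_pos y g). rewrite Hz, Hzt.
  assert (t * Rpower t g - 1 <= 2 * Rpower t g * (t - 1)) by nra.
  assert (0 <= y * Rpower y g) by nra.
  pose proof (Rmult_le_compat_l _ _ _ H3 H2).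
  lra. Qed.

Lemma f41_eq k g a b x : 0 < x -> 0 < k ->
  f41 k g a b x = Rpower x (-(2 * / (k+4))) * ((b * Rpower x (1+g) - a)^2 + b^2 * x).
Proof. intros Hx Hk. unfold f41, Rpower.
  assert (E7 : x = exp (/4 * ln x) * exp (/4 * ln x) * exp (/4 * ln x) * exp (/4 * ln x)).
  { rewrite <- !exp_plus. transitivity (exp (ln x)); [symmetry; apply exp_ln; lra| f_equal; field; try lra]. }
  set (L := ln x) in *.
  set (q := exp (/4 * L)) in *. set (p := exp (g*L)). set (w := exp (/(k+4) * L)).
  assert (E1 : exp ((3/4+g)*L) = q*q*q*p). { unfold q,p. rewrite <- !exp_plus. f_equal. field; try lra. }
  assert (E2 : exp (-(/4)*L) = /q). { unfold q. rewrite <- exp_Ropp. f_equal; field; try lra. }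
  assert (E3 : exp ((/4 - /(k+4))*L) = q / w). { unfold q, w. unfold Rdiv. rewrite <- exp_Ropp, <- exp_plus. f_equal; field; try lra. }
  assert (E5 : exp ((1+g)*L) = q*q*q*q*p). { unfold q,p. rewrite <- !exp_plus. f_equal. field; try lra. }
  assert (E6 : exp (-(2*/(k+4))*L) = /(w*w)). { unfold w. rewrite <- exp_plus, <- exp_Ropp. f_equal; field; try lra. }
  rewrite E1, E2, E3, E5, E6. rewrite E7 at 1.
  assert (0 < q) by apply exp_pos. assert (0 < w) by apply exp_pos.
  field. lra. Qed.

Lemma rp_double t e : Rpower t (2*e) = Rpower t e * Rpower t e.
Proof. replace (2*e) with (e+e) by ring. apply Rpower_plus. Qed.

Lemma rp_neg2 t e : Rpower t (-(2*e)) = / (Rpower t e * Rpower t e).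
Proof. rewrite Rpower_Ropp, rp_double. reflexivity. Qed.

Lemma mono_ratio e x y : 0 <= e <= 1 -> 1 <= x <= y -> x * Rpower y e <= y * Rpower x e.
Proof. intros. assert (Rpower x (1 - e) <= Rpower y (1-e)) by (apply Rle_Rpower_l; lra).
  unfold Rminus in H1. rewrite !Rpower_plus, !Rpower_1, !Rpower_Ropp in H1 by lra.
  pose proof (rp_pos x e). pose proof (rp_pos y e).
  apply (Rmult_le_reg_r (/ Rpower x e * / Rpower y e)).
  apply Rmult_lt_0_compat; apply Rinv_0_lt_compat; lra.
  replace (x * Rpower y e * (/ Rpower x e * / Rpower y e)) with (x * / Rpower x e) by (field; lra).
  replace (y * Rpower x e * (/ Rpower x e * / Rpower y e)) with (y * / Rpower y e) by (field; lra).
  lra. Qed.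

Lemma inv_le X Q e : 0 < X -> / X * Q <= e -> Q <= e * X.
Proof. intros. replace Q with (X * (/X * Q)) by (field; lra). nra. Qed.

Lemma abs_sq U M : 0 <= M -> U^2 <= M*M -> Rabs U <= M.
Proof. intros. unfold Rabs; destruct Rcase_abs; nra. Qed.

Lemma abs_sq_ge U M : 0 <= M -> M*M <= U^2 -> M <= Rabs U.
Proof. intros. unfold Rabs; destruct Rcase_abs; nra. Qed.

Lemma cover (S : R -> Prop) D : 0 <= D ->
  (forall y z, S y -> S z -> y <= z -> z - y <= D) ->
  lebesgue_outer_le S (2*D).
Proof.
  intros HD Hd delta Hdel.
  destruct (classic (exists s, S s)) as [[s Hs]|Hn].
  - exists (fun n => match n with O => s - D - delta/4 | _ => 0 end).
    exists (fun n => match n with O => s + D + delta/4 | _ => 0 end).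
    split; [intros [|n]; lra|]. split.
    + intros x Hx. exists O. destruct (Rle_dec s x).
      * pose proof (Hd s x Hs Hx r). lra.
      * pose proof (Hd x s Hx Hs ltac:(lra)). lra.
    + intros N. induction N; simpl; lra.
  - exists (fun _ => 0), (fun _ => 0). split; [intros; lra|]. split.
    + intros x Hx; exfalso; apply Hn; eauto.
    + intros N; induction N; simpl; lra.
Qed.

Lemma f41_nonneg k g a b x : 0 <= f41 k g a b x.
Proof. unfold f41. cbv zeta. apply Rplus_le_le_0_compat; apply Rmult_le_pos; apply pow2_ge_0. Qed.

Definition cst k nu rho := Rmin 1 (nu / (2 * (Rpower (2*sqrt rho) k * sqrt rho))).

Lemma cst_props k nu rho : 0 < nu -> 0 < rho ->
  0 < cst k nu rho /\ cst k nu rho <= 1 /\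
  cst k nu rho * (Rpower (2*sqrt rho) k * sqrt rho) <= nu / 2.
Proof. intros. unfold cst.
  assert (0 < sqrt rho) by (apply sqrt_lt_R0; lra).
  pose proof (rp_pos (2*sqrt rho) k).
  assert (0 < Rpower (2*sqrt rho) k * sqrt rho) by nra.
  assert (0 < nu / (2 * (Rpower (2*sqrt rho) k * sqrt rho))) by (apply Rdiv_lt_0_compat; lra).
  split; [apply Rmin_pos; lra|]. split; [apply Rmin_l|].
  apply Rle_trans with (nu / (2 * (Rpower (2 * sqrt rho) k * sqrt rho)) * (Rpower (2*sqrt rho) k * sqrt rho)).
  apply Rmult_le_compat_r; [lra| apply Rmin_r].
  right; field; lra.
Qed.

Lemma div_nn x y : 0 <= x -> 0 < y -> 0 <= x / y.
Proof. intros. unfold Rdiv. apply Rmult_le_pos; [lra| left; apply Rinv_0_lt_compat; lra]. Qed.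

Lemma core k mu nu g rho a b eps x1 x2 y z :
  0 < k -> 0 < mu -> 0 < nu -> 0 < g -> g < / (k+4) -> 0 < rho -> 0 < b ->
  (b >= mu \/ (0 < Rabs a /\ Rpower (Rabs a) k * b >= nu)) ->
  0 < eps -> eps < rho/64 -> eps < mu^2 ->
  1 <= x1 -> x1 < x2 -> f41 k g a b x1 = rho ->
  x1 < y < x2 -> f41 k g a b y <= eps ->
  x1 < z < x2 -> f41 k g a b z <= eps -> y <= z ->
  z - y <= (64 + 4 / cst k nu rho) * (sqrt eps / sqrt rho) * (x2 - x1).
Proof.
  intros Hk Hmu Hnu Hg Hgo Hrho Hb Hcond He Her Hem Hx1 Hx12 Hf1 Hy Hfy Hz Hfz Hyz.
  destruct (cst_props k nu rho Hnu Hrho) as [Hc0 [Hc1 HcK]].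
  set (c := cst k nu rho) in *.
  rewrite f41_eq, rp_neg2 in Hf1, Hfy, Hfz by lra.
  assert (Hom : / (k+4) * (k+4) = 1) by (field; lra).
  set (om := / (k+4)) in *.
  assert (Hom0 : 0 < om) by (unfold om; apply Rinv_0_lt_compat; lra).
  assert (Hom4 : om < 1/4) by nra.
  assert (Hk1 : (k+1)*om < 1) by nra.
  set (E := sqrt eps) in *. set (P := sqrt rho) in *.
  assert (HE : 0 < E) by (apply sqrt_lt_R0; lra).
  assert (HP : 0 < P) by (apply sqrt_lt_R0; lra).
  assert (HEE : E * E = eps) by (apply sqrt_sqrt; lra).
  assert (HPP : P * P = rho) by (apply sqrt_sqrt; lra).
  assert (HEP : 8 * E < P) by nra.
  set (w1 := Rpower x1 om) in *. set (wy := Rpower y om) in *.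
  set (wz := Rpower z om) in *. set (wx2 := Rpower x2 om) in *.
  assert (Hw1 : 0 < w1) by apply rp_pos. assert (Hwy : 0 < wy) by apply rp_pos.
  assert (Hwz : 0 < wz) by apply rp_pos. assert (Hwx2 : 0 < wx2) by apply rp_pos.
  set (U1 := b * Rpower x1 (1+g) - a) in *.
  set (Uy := b * Rpower y (1+g) - a) in *.
  set (Uz := b * Rpower z (1+g) - a) in *.
  apply inv_le in Hfy; [|nra]. apply inv_le in Hfz; [|nra].
  assert (HUy : Rabs Uy <= E * wy). { apply abs_sq; nra. }
  assert (HUz : Rabs Uz <= E * wz). { apply abs_sq; nra. }
  assert (Hby : b^2 * y <= eps * (wy*wy)) by nra.
  assert (Hwyy : wy * wy <= y).
  { unfold wy. rewrite <- rp_double. rewrite <- (Rpower_1 y) at 2 by lra. apply Rle_Rpower; lra. }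
  destruct Hcond as [Hbmu | [Ha Hnua]].
  { exfalso. assert (b^2 <= eps) by nra. nra. }
  assert (Hmr : x1 * (wy*wy) <= y * (w1*w1)).
  { unfold wy, w1. rewrite <- !rp_double. apply mono_ratio; lra. }
  assert (Hbx1 : b^2 * x1 <= eps * (w1 * w1)).
  { apply (Rmult_le_reg_l (wy*wy)); [nra|]. nra. }
  assert (HU1e : U1^2 + b^2*x1 = rho * (w1*w1)).
  { rewrite <- Hf1. field. lra. }
  assert (HU1 : P * w1 / 2 <= Rabs U1).
  { assert (eps*(w1*w1) <= rho*(w1*w1)/2).
    { assert (hw : 0 <= w1*w1) by nra. assert (he : eps <= rho/2) by lra.
      pose proof (Rmult_le_compat_r _ _ _ hw he). lra. }
    apply abs_sq_ge. nra. rewrite <- HPP in *.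
    replace (P * w1 / 2 * (P * w1 / 2)) with (P*P*(w1*w1)/4) by field. nra. }
  assert (Hgy : 0 < Rpower y g) by apply rp_pos.
  assert (Hg1 : 0 < Rpower x1 g) by apply rp_pos.
  assert (Hdzy : b * Rpower y g * (z - y) <= Uz - Uy).
  { pose proof (diff_lower y z g ltac:(lra) ltac:(lra)).
    replace (Uz - Uy) with (b * (Rpower z (1+g) - Rpower y (1+g))) by (unfold Uz, Uy; ring).
    rewrite Rmult_assoc. apply Rmult_le_compat_l; lra. }
  assert (Hdy1 : Uy - U1 <= 2 * b * Rpower y g * (y - x1)).
  { pose proof (diff_upper x1 y g ltac:(lra) ltac:(lra)).
    replace (Uy - U1) with (b * (Rpower y (1+g) - Rpower x1 (1+g))) by (unfold U1, Uy; ring).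
    replace (2 * b * Rpower y g * (y - x1)) with (b * (2 * Rpower y g * (y - x1))) by ring.
    apply Rmult_le_compat_l; lra. }
  assert (Hdy1' : 0 <= Uy - U1).
  { pose proof (diff_lower x1 y g ltac:(lra) ltac:(lra)).
    replace (Uy - U1) with (b * (Rpower y (1+g) - Rpower x1 (1+g))) by (unfold U1, Uy; ring).
    apply Rmult_le_pos; [lra|]. assert (0 <= Rpower x1 g * (y - x1)) by (apply Rmult_le_pos; lra). lra. }
  assert (Hg1y : Rpower x1 g <= Rpower y g) by (apply rp_mono_base; lra).
  assert (Hzy0 : 0 <= z - y) by lra.
  assert (Hnn : 0 <= 4 / c * (E / P) * (x2 - x1)).
  { apply Rmult_le_pos; [apply Rmult_le_pos|]; try lra.
    apply div_nn; lra. apply div_nn; lra. }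
  destruct (Rle_dec x2 (2*x1)) as [HA|HB].
  -
    assert (Hwy2 : wy <= 2 * w1).
    { apply Rle_trans with (Rpower (2*x1) om). apply rp_mono_base; lra. apply rp_two; lra. }
    assert (Hwz2 : wz <= 2 * w1).
    { apply Rle_trans with (Rpower (2*x1) om). apply rp_mono_base; lra. apply rp_two; lra. }
    assert (Hgy2 : Rpower y g <= 2 * Rpower x1 g).
    { apply Rle_trans with (Rpower (2*x1) g). apply rp_mono_base; lra. apply rp_two; lra. }
    assert (HU1y : Rabs U1 <= Rabs Uy + (Uy - U1)).
    { unfold Rabs; destruct (Rcase_abs U1), (Rcase_abs Uy); lra. }
    set (X := b * Rpower x1 g).
    assert (HX : 0 < X) by (unfold X; nra).
    assert (H1 : 2 * b * Rpower y g * (y - x1) <= 4 * X * (x2 - x1)).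
    { unfold X. assert (hh : 0 <= y - x1 <= x2 - x1) by lra.
      assert (h1 : Rpower y g * (y - x1) <= 2 * Rpower x1 g * (y - x1)) by (apply Rmult_le_compat_r; lra).
      assert (h2 : Rpower x1 g * (y - x1) <= Rpower x1 g * (x2 - x1)) by (apply Rmult_le_compat_l; lra).
      assert (h3 : b * (Rpower y g * (y - x1)) <= b * (2 * Rpower x1 g * (x2 - x1))) by (apply Rmult_le_compat_l; lra).
      lra. }
    assert (H2 : P * w1 <= 16 * X * (x2 - x1)) by nra.
    assert (H3 : X * (z - y) <= 4 * E * w1).
    { assert (X * (z-y) <= b * Rpower y g * (z - y)) by (unfold X; apply Rmult_le_compat_r; [lra|]; apply Rmult_le_compat_l; lra).
      assert (Uz - Uy <= Rabs Uz + Rabs Uy).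
      { unfold Rabs; destruct (Rcase_abs Uz), (Rcase_abs Uy); lra. }
      nra. }
    assert (H4 : z - y <= 64 * (E / P) * (x2 - x1)).
    { apply (Rmult_le_reg_l (P * X)); [nra|].
      replace (P * X * (64 * (E / P) * (x2 - x1))) with (64 * E * (X * (x2 - x1))) by (field; lra).
      nra. }
    nra.
  -
    assert (HB' : 2 * x1 < x2) by lra.
    assert (Hyp : Rpower y (1+g) = y * Rpower y g).
    { rewrite Rpower_plus, Rpower_1 by lra. reflexivity. }
    assert (Hclaim : c * P * wy <= b * Rpower y g * y).
    { destruct (Rle_dec (c * P * wy) (b * Rpower y g * y)) as [h|h]; [exact h|exfalso].
      apply Rnot_le_lt in h.
      assert (Haa : Rabs a <= b * Rpower y g * y + Rabs Uy).
      { assert (a = b * Rpower y g * y - Uy) by (unfold Uy; rewrite Hyp; ring).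
        rewrite H. unfold Rabs at 1; destruct (Rcase_abs (b * Rpower y g * y - Uy)), (Rabs_pos Uy);
        unfold Rabs in *; destruct (Rcase_abs Uy); nra. }
      assert (Ha2 : Rabs a <= 2 * P * wy) by nra.
      assert (Hak : Rpower (Rabs a) k <= Rpower (2*P) k * Rpower y (om * k)).
      { apply Rle_trans with (Rpower (2*P*wy) k). apply rp_mono_base; lra.
        rewrite <- Rpower_mult_distr by lra. unfold wy. rewrite Rpower_mult. lra. }
      assert (HW : Rpower y (om*k) * wy <= y * Rpower y g).
      { unfold wy. rewrite <- Rpower_plus, <- Hyp. apply Rle_Rpower; nra. }
      pose proof (rp_pos y (om*k)). pose proof (rp_pos (2*P) k).
      assert (Hwb : Rpower y (om*k) * b < c * P).
      { apply (Rmult_lt_reg_r (y * Rpower y g)); [nra|].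
        apply Rlt_le_trans with (Rpower y (om*k) * (c*P*wy)).
        - replace (Rpower y (om * k) * b * (y * Rpower y g)) with (Rpower y (om*k) * (b * Rpower y g * y)) by ring.
          apply Rmult_lt_compat_l; lra.
        - replace (Rpower y (om * k) * (c * P * wy)) with ((c*P) * (Rpower y (om*k) * wy)) by ring.
          apply Rmult_le_compat_l; nra. }
      assert (Rpower (Rabs a) k * b <= Rpower (2*P) k * (Rpower y (om*k) * b)).
      { replace (Rpower (2*P) k * (Rpower y (om*k) * b)) with ((Rpower (2*P) k * Rpower y (om*k)) * b) by ring.
        apply Rmult_le_compat_r; lra. }
      assert (Rpower (2*P) k * (Rpower y (om*k) * b) <= Rpower (2*P) k * (c * P)).
      { apply Rmult_le_compat_l; lra. }
      nra. }
    assert (Hwyx : wy <= wx2) by (apply rp_mono_base; lra).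
    assert (Hwzx : wz <= wx2) by (apply rp_mono_base; lra).
    assert (Hd2 : b * Rpower y g * (z - y) <= 2 * E * wx2).
    { assert (Uz - Uy <= Rabs Uz + Rabs Uy).
      { unfold Rabs; destruct (Rcase_abs Uz), (Rcase_abs Uy); lra. }
      nra. }
    assert (Hmr2 : y * wx2 <= x2 * wy).
    { unfold wx2, wy. apply mono_ratio; lra. }
    assert (H5 : c * P * wy * (z - y) <= 2 * E * x2 * wy).
    { apply Rle_trans with (y * (b * Rpower y g * (z - y))). nra.
      nra. }
    assert (H6 : c * P * (z - y) <= 4 * E * (x2 - x1)).
    { assert (c * P * (z - y) <= 2 * E * x2).
      { apply (Rmult_le_reg_r wy); [lra|]. nra. }
      assert (2*E*x2 <= 4*E*(x2-x1)) by nra.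
      lra. }
    assert (H7 : z - y <= 4 / c * (E / P) * (x2 - x1)).
    { apply (Rmult_le_reg_l (c * P)); [nra|].
      replace (c * P * (4 / c * (E / P) * (x2 - x1))) with (4 * E * (x2 - x1)) by (field; lra).
      lra. }
    assert (0 <= 64 * (E / P) * (x2 - x1)).
    { apply Rmult_le_pos; [|lra]. apply Rmult_le_pos; [lra|]. apply div_nn; lra. }
    nra.
Qed.

Lemma good_pos k mu nu g rho a b :
  0 < k -> 0 < mu -> 0 < nu -> 0 < g -> g < / (k+4) -> 0 < rho -> 0 < b ->
  (Rabs b >= mu \/ nnpow (Rabs a) k * Rabs b >= nu) ->
  good (f41 k g a b) (2 * (64 + 4 / cst k nu rho)) (/2) rho (Rmin (rho/64) (mu^2)).
Proof.
  intros Hk Hmu Hnu Hg Hgo Hrho Hb Hcond.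
  intros eps [He1 He2] x1 x2 Hx1 Hx12 Hf1.
  rewrite Rabs_pos_eq in Hf1 by apply f41_nonneg.
  assert (Hr : eps < rho/64) by (pose proof (Rmin_l (rho/64) (mu^2)); lra).
  assert (Hm : eps < mu^2) by (pose proof (Rmin_r (rho/64) (mu^2)); lra).
  destruct (cst_props k nu rho Hnu Hrho) as [Hc0 _].
  rewrite Rpower_sqrt by (apply Rdiv_lt_0_compat; lra).
  rewrite sqrt_div_alt by lra.
  replace (2 * (64 + 4 / cst k nu rho) * (sqrt eps / sqrt rho) * (x2 - x1))
    with (2 * ((64 + 4 / cst k nu rho) * (sqrt eps / sqrt rho) * (x2 - x1))) by ring.
  apply cover.
  - assert (0 < sqrt rho) by (apply sqrt_lt_R0; lra).
    assert (0 <= sqrt eps) by apply sqrt_pos.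
    apply Rmult_le_pos; [|lra]. apply Rmult_le_pos.
    + assert (0 <= 4 / cst k nu rho) by (apply div_nn; lra). lra.
    + apply div_nn; lra.
  - intros y z [Hy Hfy] [Hz Hfz] Hyz.
    apply (core k mu nu g rho a b eps x1 x2 y z); try assumption; try lra.
    + rewrite Rabs_pos_eq in Hcond by lra. destruct Hcond as [h|h]; [left; exact h| right].
      unfold nnpow in h. destruct (Rle_dec (Rabs a) 0). lra. split; [lra|exact h].
    + pose proof (Rle_abs (f41 k g a b y)). lra.
    + pose proof (Rle_abs (f41 k g a b z)). lra.
Qed.

Theorem lemma4p1 (kappa mu nu gamma : R) :
  0 < kappa -> 0 < mu -> 0 < nu -> 0 < gamma -> gamma < / (kappa + 4) ->
  forall rho : R, 0 < rho ->
  exists C eps0 : R, 0 < C /\ 0 < eps0 /\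
    forall a b : R, (a <> 0 \/ b <> 0) ->
      (Rabs b >= mu \/ nnpow (Rabs a) kappa * Rabs b >= nu) ->
      rho <= f41 kappa gamma a b 1 ->
      good (f41 kappa gamma a b) C (/2) rho eps0.
Proof.
  intros Hk Hmu Hnu Hg Hgo rho Hrho.
  destruct (cst_props kappa nu rho Hnu Hrho) as [Hc0 _].
  exists (2 * (64 + 4 / cst kappa nu rho)), (Rmin (rho/64) (mu^2)).
  split; [assert (0 <= 4 / cst kappa nu rho) by (apply div_nn; lra); lra|].
  split; [apply Rmin_pos; nra|].
  intros a b Hab Hcond _.
  destruct (Rtotal_order b 0) as [Hb|[Hb|Hb]].
  - replace (f41 kappa gamma a b) with (f41 kappa gamma (-a) (-b)).
    + apply good_pos; try assumption; try lra. rewrite !Rabs_Ropp. exact Hcond.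
    + extensionality x. unfold f41. cbv zeta. ring.
  - exfalso. subst b. rewrite Rabs_R0, Rmult_0_r in Hcond. lra.
  - apply good_pos; assumption.
Qed.
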